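(* If the equations $\frac{u(\mathfrak{z}_2)-u(\mathfrak{z}_1)}{u(\mathfrak{z}_3)-u(\mathfrak{z}_2)}=\frac{v(\mathfrak{z}_3)-v(\mathfrak{z}_2)}{v(\mathfrak{z}_1)-v(\mathfrak{z}_3)}$ hold on all positively oriented elementary triangles, then the constraints \[ \alpha u=k\frac{f_0g_0f_3}{f_0g_0+g_0f_3+f_3g_3}+\ell\frac{f_2g_2f_5}{f_2g_2+g_2f_5+f_5g_5}+m\frac{f_4g_4f_1}{f_4g_4+g_4f_1+f_1g_1}, \] \[ \beta v=k\frac{g_0f_3g_3}{f_0g_0+g_0f_3+f_3g_3}+\ell\frac{g_2f_5g_5}{f_2g_2+g_2f_5+f_5g_5}+m\frac{g_4f_1g_1}{f_4g_4+g_4f_1+f_1g_1} \] (at every vertex) imply a similar equation for the field $w$ (vanishing at $\mathfrak{z}=0$): \begin{equation} \gamma w=k\frac{1}{f_0g_0+g_0f_3+f_3g_3}+\ell\frac{1}{f_2g_2+g_2f_5+f_5g_5}+m\frac{1}{f_4g_4+g_4f_1+f_1g_1}, \end{equation} where $\gamma=1-\alpha-\beta$.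
   Context: On the regular triangular lattice with vertices $\mathfrak{z}=k+\ell\omega+m\omega^2$ ($\omega=e^{2\pi i/3}$), $u,v$ are complex functions on vertices vanishing at $\mathfrak{z}=0$, and $w$ is the third field: $w(\mathfrak{z}_2)-w(\mathfrak{z}_1)=1/\big((u(\mathfrak{z}_2)-u(\mathfrak{z}_1))(v(\mathfrak{z}_2)-v(\mathfrak{z}_1))\big)$ for every positively oriented edge $(\mathfrak{z}_1,\mathfrak{z}_2)$ (i.e. $\mathfrak{z}_2-\mathfrak{z}_1\in\{1,\omega,\omega^2\}$), with $w(0)=0$. Positively oriented elementary triangles have consecutive vertices with differences in $\{1,\omega,\omega^2\}$. At a vertex $\mathfrak{z}$ with representative $(k,\ell,m)$, $u=u(\mathfrak{z})$, $v=v(\mathfrak{z})$, $w=w(\mathfrak{z})$, and for the edges $\mathfrak{e}_0=(\mathfrak{z},\mathfrak{z}+1)$, $\mathfrak{e}_2=(\mathfrak{z},\mathfrak{z}+\omega)$, $\mathfrak{e}_4=(\mathfrak{z},\mathfrak{z}+\omega^2)$, $\mathfrak{e}_1=(\mathfrak{z}-\omega^2,\mathfrak{z})$, $\mathfrak{e}_3=(\mathfrak{z}-1,\mathfrak{z})$, $\mathfrak{e}_5=(\mathfrak{z}-\omega,\mathfrak{z})$, $f_j$, $g_j$ are the increments of $u$, $v$ along $\mathfrak{e}_j$ (end minus start). $\alpha,\beta\in\mathbb C$. *)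

(* Defs.v *)
From HB Require Import structures.
From mathcomp Require Import all_boot all_order all_algebra.
From mathcomp Require Import complex.
From mathcomp Require Import reals.

Set Implicit Arguments.
Unset Strict Implicit.
Unset Printing Implicit Defensive.

Import Order.TTheory GRing.Theory Num.Theory.
Local Open Scope ring_scope.

(* Vertices of the regular triangular lattice.  Since 1 + w + w^2 = 0
   (w = exp(2 pi i/3)), every vertex z = k + l w + m w^2 is uniquely
   z = a + b w with a = k - m, b = l - m; we encode z by (a, b). *)
Definition vertex := (int * int)%type.

Definition vadd (z z' : vertex) : vertex := (z.1 + z'.1, z.2 + z'.2).
Definition vsub (z z' : vertex) : vertex := (z.1 - z'.1, z.2 - z'.2).

(* the vertex k + l w + m w^2 *)
Definition vtx (k l m : int) : vertex := (k - m, l - m).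

(* the unit steps 1, w, w^2 (w^2 = -1 - w) *)
Definition d1 : vertex := (1, 0).
Definition dw : vertex := (0, 1).
Definition dw2 : vertex := (-1, -1).

Definition posdir (d : vertex) : bool := [|| d == d1, d == dw | d == dw2].

Section Fields.
Variable R : realType.
Local Notation C := (R[i])%type.

(* increment of a field F along the edges e_0..e_5 at vertex z
   (end minus start) *)
Definition incr0 (F : vertex -> C) (z : vertex) := F (vadd z d1) - F z.
Definition incr2 (F : vertex -> C) (z : vertex) := F (vadd z dw) - F z.
Definition incr4 (F : vertex -> C) (z : vertex) := F (vadd z dw2) - F z.
Definition incr1 (F : vertex -> C) (z : vertex) := F z - F (vsub z dw2).
Definition incr3 (F : vertex -> C) (z : vertex) := F z - F (vsub z d1).
Definition incr5 (F : vertex -> C) (z : vertex) := F z - F (vsub z dw).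

Definition den0 (u v : vertex -> C) z :=
  incr0 u z * incr0 v z + incr0 v z * incr3 u z + incr3 u z * incr3 v z.
Definition den1 (u v : vertex -> C) z :=
  incr2 u z * incr2 v z + incr2 v z * incr5 u z + incr5 u z * incr5 v z.
Definition den2 (u v : vertex -> C) z :=
  incr4 u z * incr4 v z + incr4 v z * incr1 u z + incr1 u z * incr1 v z.
End Fields.

(* Main.v *)
Require Import Defs.
From HB Require Import structures.
From mathcomp Require Import all_boot all_order all_algebra.
From mathcomp Require Import complex.
From mathcomp Require Import reals.
Import Order.TTheory GRing.Theory Num.Theory.
Local Open Scope ring_scope.

From mathcomp Require Import ring.

Set Implicit Arguments.
Unset Strict Implicit.
Unset Printing Implicit Defensive.

Section Aux.

Lemma core_id (F : fieldType) (uz uZ up uq ur us vz vZ vp vq vr vs : F) :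
  up - uz != 0 -> up - uq != 0 -> ur - uz != 0 -> uZ - us != 0 ->
  (uZ - uz) * (vz - vp) = (up - uZ) * (vp - vZ) ->
  (uq - uz) * (vz - vp) = (up - uq) * (vp - vq) ->
  (uZ - uz) * (vz - vr) = (ur - uZ) * (vr - vZ) ->
  (us - ur) * (vr - vZ) = (uZ - us) * (vZ - vs) ->
  let f0 := uZ - uz in let g0 := vZ - vz in
  let N fo go fi gi := f0 * g0 * (f0 * g0) + fo * go * fi * g0 + go * fi * gi * f0 in
  let P fo go fi gi := fo * go + go * fi + fi * gi in
  N (uq - uz) (vq - vz) (uz - ur) (vz - vr) * P (up - uZ) (vp - vZ) (uZ - us) (vZ - vs)
  = N (up - uZ) (vp - vZ) (uZ - us) (vZ - vs) * P (uq - uz) (vq - vz) (uz - ur) (vz - vr).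
Proof.
move=> h1 h2 h3 h4 t1 t2 t3 t4 f0 g0 N P.
have Hvp : vp = ((uZ - uz) * vz + (up - uZ) * vZ) / (up - uz).
  apply: (mulIf h1); rewrite mulfVK //; apply/eqP; rewrite -subr_eq0; apply/eqP.
  have e : vp * (up - uz) - ((uZ - uz) * vz + (up - uZ) * vZ) = (up - uZ) * (vp - vZ) - (uZ - uz) * (vz - vp) by ring.
  by rewrite e t1 subrr.
have Hvq : vq = vp - (uq - uz) * (vz - vp) / (up - uq).
  by rewrite t2 [(up - uq) * _]mulrC mulfK // opprB addrC subrK.
have Hvr : vr = ((uZ - uz) * vz + (ur - uZ) * vZ) / (ur - uz).
  apply: (mulIf h3); rewrite mulfVK //; apply/eqP; rewrite -subr_eq0; apply/eqP.
  have e : vr * (ur - uz) - ((uZ - uz) * vz + (ur - uZ) * vZ) = (ur - uZ) * (vr - vZ) - (uZ - uz) * (vz - vr) by ring.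
  by rewrite e t3 subrr.
have Hvs : vs = vZ - (us - ur) * (vr - vZ) / (uZ - us).
  by rewrite t4 [(uZ - us) * _]mulrC mulfK // opprB addrC subrK.
rewrite /N /P /f0 /g0 Hvs Hvq Hvp Hvr.
field.
all: by rewrite ?h1 ?h2 ?h3 ?h4.
Qed.

Lemma crossY (F : fieldType) (f g a b x1 x2 y1 y2 : F) :
  f != 0 -> g != 0 -> a != 0 -> b != 0 ->
  (f * g * (f * g) + x1 * g + x2 * f) * b = (f * g * (f * g) + y1 * g + y2 * f) * a ->
  f * g / a + x1 / a / f + x2 / a / g = f * g / b + y1 / b / f + y2 / b / g.
Proof.
move=> hf hg ha hb E.
have -> : f * g / a + x1 / a / f + x2 / a / g
   = (f * g * (f * g) + x1 * g + x2 * f) / (a * f * g) by field; rewrite ?hf ?hg ?ha.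
have -> : f * g / b + y1 / b / f + y2 / b / g
   = (f * g * (f * g) + y1 * g + y2 * f) / (b * f * g) by field; rewrite ?hf ?hg ?hb.
apply/eqP; rewrite eqr_div ?mulf_neq0 //.
apply/eqP; have -> : (f * g * (f * g) + x1 * g + x2 * f) * (b * f * g) = ((f * g * (f * g) + x1 * g + x2 * f) * b) * (f * g) by ring.
rewrite E; ring.
Qed.

Lemma core_Y (F : fieldType) (uz uZ up uq ur us vz vZ vp vq vr vs : F) :
  up - uz != 0 -> up - uq != 0 -> ur - uz != 0 -> uZ - us != 0 ->
  uZ - uz != 0 -> vZ - vz != 0 ->
  (uZ - uz) * (vz - vp) = (up - uZ) * (vp - vZ) ->
  (uq - uz) * (vz - vp) = (up - uq) * (vp - vq) ->
  (uZ - uz) * (vz - vr) = (ur - uZ) * (vr - vZ) ->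
  (us - ur) * (vr - vZ) = (uZ - us) * (vZ - vs) ->
  (uq - uz) * (vq - vz) + (vq - vz) * (uz - ur) + (uz - ur) * (vz - vr) != 0 ->
  (up - uZ) * (vp - vZ) + (vp - vZ) * (uZ - us) + (uZ - us) * (vZ - vs) != 0 ->
  (uZ - uz) * (vZ - vz) / ((uq - uz) * (vq - vz) + (vq - vz) * (uz - ur) + (uz - ur) * (vz - vr))
  + (uq - uz) * (vq - vz) * (uz - ur) / ((uq - uz) * (vq - vz) + (vq - vz) * (uz - ur) + (uz - ur) * (vz - vr)) / (uZ - uz)
  + (vq - vz) * (uz - ur) * (vz - vr) / ((uq - uz) * (vq - vz) + (vq - vz) * (uz - ur) + (uz - ur) * (vz - vr)) / (vZ - vz)
  = (uZ - uz) * (vZ - vz) / ((up - uZ) * (vp - vZ) + (vp - vZ) * (uZ - us) + (uZ - us) * (vZ - vs))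
  + (up - uZ) * (vp - vZ) * (uZ - us) / ((up - uZ) * (vp - vZ) + (vp - vZ) * (uZ - us) + (uZ - us) * (vZ - vs)) / (uZ - uz)
  + (vp - vZ) * (uZ - us) * (vZ - vs) / ((up - uZ) * (vp - vZ) + (vp - vZ) * (uZ - us) + (uZ - us) * (vZ - vs)) / (vZ - vz).
Proof.
move=> h1 h2 h3 h4 hf hg t1 t2 t3 t4 hP hP'.
apply: crossY => //.
exact: (core_id h1 h2 h3 h4 t1 t2 t3 t4).
Qed.

End Aux.


Definition outd (K : zmodType) (F : vertex -> K) d z := F (vadd z d) - F z.
Definition ind (K : zmodType) (F : vertex -> K) d z := F z - F (vsub z d).
Definition vneg (d : vertex) : vertex := (- d.1, - d.2).

Lemma vsub_addl (z d : vertex) : vsub (vadd z d) z = d.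
Proof. by case: z d => [? ?] [? ?]; rewrite /vsub /vadd /=; congr (_, _); ring. Qed.
Lemma vsub_addK (z d : vertex) : vsub (vadd z d) d = z.
Proof. by case: z d => [? ?] [? ?]; rewrite /vsub /vadd /=; congr (_, _); ring. Qed.
Lemma vadd_subK (z d : vertex) : vadd (vsub z d) d = z.
Proof. by case: z d => [? ?] [? ?]; rewrite /vsub /vadd /=; congr (_, _); ring. Qed.
Lemma vsub_subr (z d : vertex) : vsub z (vsub z d) = d.
Proof. by case: z d => [? ?] [? ?]; rewrite /vsub /vadd /=; congr (_, _); ring. Qed.
Lemma vadd_sub (x y : vertex) : vadd x (vsub y x) = y.
Proof. by case: x y => [? ?] [? ?]; rewrite /vsub /vadd /=; congr (_, _); ring. Qed.
Lemma vL2 (z d e : vertex) : vsub (vadd (vadd z d) e) (vadd z e) = d.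
Proof. by case: z d e => [? ?] [? ?] [? ?]; rewrite /vsub /vadd /=; congr (_, _); ring. Qed.
Lemma vL3 (z d e : vertex) : vsub z (vadd (vadd z d) e) = vneg (vadd d e).
Proof. by case: z d e => [? ?] [? ?] [? ?]; rewrite /vsub /vadd /vneg /=; congr (_, _); ring. Qed.
Lemma vL6 (z d e : vertex) : vsub (vsub z e) (vadd z d) = vneg (vadd d e).
Proof. by case: z d e => [? ?] [? ?] [? ?]; rewrite /vsub /vadd /vneg /=; congr (_, _); ring. Qed.
Lemma vL8 (z d e : vertex) : vsub (vsub (vadd z d) e) (vsub z e) = d.
Proof. by case: z d e => [? ?] [? ?] [? ?]; rewrite /vsub /vadd /=; congr (_, _); ring. Qed.

Section Lat.
Variable R : realType.
Variables u v : vertex -> R[i].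

Hypothesis Hu : forall z d, posdir d -> u (vadd z d) - u z != 0.
Hypothesis Hv : forall z d, posdir d -> v (vadd z d) - v z != 0.
Hypothesis Htri : forall z1 z2 z3, posdir (vsub z2 z1) -> posdir (vsub z3 z2) -> posdir (vsub z1 z3) ->
     (u z2 - u z1) / (u z3 - u z2) = (v z3 - v z2) / (v z1 - v z3).

Lemma Hu' x y : posdir (vsub y x) -> u y - u x != 0.
Proof. by move=> /(Hu x); rewrite vadd_sub. Qed.
Lemma Hv' x y : posdir (vsub y x) -> v y - v x != 0.
Proof. by move=> /(Hv x); rewrite vadd_sub. Qed.

Lemma Hneg (K : zmodType) (a b : K) : a - b != 0 -> b - a != 0.
Proof. by rewrite -opprB oppr_eq0. Qed.

Lemma tri_prod z1 z2 z3 : posdir (vsub z2 z1) -> posdir (vsub z3 z2) -> posdir (vsub z1 z3) ->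
  (u z2 - u z1) * (v z1 - v z3) = (u z3 - u z2) * (v z3 - v z2).
Proof.
move=> p1 p2 p3; have := Htri p1 p2 p3.
have h1 := Hu' p2; have h2 := Hv' p3.
by move/eqP; rewrite eqr_div // => /eqP ->; rewrite mulrC.
Qed.

Definition Pd d z := outd u d z * outd v d z + outd v d z * ind u d z + ind u d z * ind v d z.
Definition Ac d z := outd u d z * outd v d z * ind u d z / Pd d z.
Definition Bc d z := outd v d z * ind u d z * ind v d z / Pd d z.
Definition Cc d z := (Pd d z)^-1.
Definition Yf d e z z' :=
  outd u d z * outd v d z * Cc e z' + Ac e z' / outd u d z + Bc e z' / outd v d z.

Lemma Yother d e z : posdir d -> posdir e -> posdir (vneg (vadd d e)) ->
  Pd e z != 0 -> Pd e (vadd z d) != 0 -> Yf d e z z = Yf d e z (vadd z d).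
Proof.
move=> pd pe pn hP hP'.
have h1 : u (vadd (vadd z d) e) - u z != 0.
  by apply: Hneg; apply: Hu'; rewrite vL3.
have h2 : u (vadd (vadd z d) e) - u (vadd z e) != 0 by apply: Hu'; rewrite vL2.
have h3 : u (vsub z e) - u z != 0 by apply: Hneg; apply: Hu'; rewrite vsub_subr.
have h4 : u (vadd z d) - u (vsub (vadd z d) e) != 0 by apply: Hu'; rewrite vsub_subr.
have hf : u (vadd z d) - u z != 0 by apply: Hu'; rewrite vsub_addl.
have hg : v (vadd z d) - v z != 0 by apply: Hv'; rewrite vsub_addl.
have t1 := @tri_prod z (vadd z d) (vadd (vadd z d) e).
rewrite vsub_addl vsub_addl vL3 in t1; have {}t1 := t1 pd pe pn.
have t2 := @tri_prod z (vadd z e) (vadd (vadd z d) e).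
rewrite vsub_addl vL2 vL3 in t2; have {}t2 := t2 pe pd pn.
have t3 := @tri_prod z (vadd z d) (vsub z e).
rewrite vsub_addl vL6 vsub_subr in t3; have {}t3 := t3 pd pn pe.
have t4 := @tri_prod (vsub z e) (vsub (vadd z d) e) (vadd z d).
rewrite vL8 vsub_subr vL6 in t4; have {}t4 := t4 pd pe pn.
move: hP hP'; rewrite /Yf /Ac /Bc /Cc /Pd /outd /ind => hP hP'.
exact: (core_Y h1 h2 h3 h4 hf hg t1 t2 t3 t4 hP hP').
Qed.

Lemma Yself0 d z : posdir d -> Pd d z != 0 -> Yf d d z z = 1.
Proof.
move=> pd; have hf : u (vadd z d) - u z != 0 by apply: Hu.
have hg : v (vadd z d) - v z != 0 by apply: Hv.
rewrite /Yf /Ac /Bc /Cc /Pd /outd => hP.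
field; by rewrite ?hf ?hg ?hP.
Qed.

Lemma Yself1 d z : posdir d -> Pd d (vadd z d) != 0 -> Yf d d z (vadd z d) = 1.
Proof.
move=> pd; have hf : u (vadd z d) - u z != 0 by apply: Hu.
have hg : v (vadd z d) - v z != 0 by apply: Hv.
rewrite /Yf /Ac /Bc /Cc /Pd /outd /ind vsub_addK => hP.
field; by rewrite ?hf ?hg ?hP.
Qed.
End Lat.


Lemma step_alg (F : fieldType) (f g al be w w' n0 n1 n2 A0 A1 A2 B0 B1 B2 C0 C1 C2
   A0' A1' A2' B0' B1' B2' C0' C1' C2' u u' v v' : F) :
 f != 0 -> g != 0 ->
 f*g*C0 + A0/f + B0/g = 1 -> f*g*C0' + A0'/f + B0'/g = 1 ->
 f*g*C1 + A1/f + B1/g = f*g*C1' + A1'/f + B1'/g ->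
 f*g*C2 + A2/f + B2/g = f*g*C2' + A2'/f + B2'/g ->
 u' - u = f -> v' - v = g -> w' - w = (f*g)^-1 ->
 al*u = n0*A0 + n1*A1 + n2*A2 -> al*u' = (n0+1)*A0' + n1*A1' + n2*A2' ->
 be*v = n0*B0 + n1*B1 + n2*B2 -> be*v' = (n0+1)*B0' + n1*B1' + n2*B2' ->
 ((1-al-be)*w = n0*C0 + n1*C1 + n2*C2 <-> (1-al-be)*w' = (n0+1)*C0' + n1*C1' + n2*C2').
Proof.
move=> hf hg Y0 Y0' Y1 Y2 eu ev ew Ha Ha' Hb Hb'.
have hfg : f * g != 0 by rewrite mulf_neq0.
have eC0 : C0 = (1 - A0/f - B0/g)/(f*g) by rewrite -Y0; field; rewrite hf hg.
have eC0' : C0' = (1 - A0'/f - B0'/g)/(f*g) by rewrite -Y0'; field; rewrite hf hg.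
have eC1' : C1' = (f*g*C1 + A1/f + B1/g - A1'/f - B1'/g)/(f*g) by rewrite Y1; field; rewrite hf hg.
have eC2' : C2' = (f*g*C2 + A2/f + B2/g - A2'/f - B2'/g)/(f*g) by rewrite Y2; field; rewrite hf hg.
have eal : al = ((n0+1)*A0' + n1*A1' + n2*A2' - (n0*A0 + n1*A1 + n2*A2)) / f.
  apply: (mulIf hf); rewrite mulfVK // -Ha -Ha' -eu; ring.
have ebe : be = ((n0+1)*B0' + n1*B1' + n2*B2' - (n0*B0 + n1*B1 + n2*B2)) / g.
  apply: (mulIf hg); rewrite mulfVK // -Hb -Hb' -ev; ring.
have ew' : w' = w + (f*g)^-1 by rewrite -ew; ring.
have E : (1-al-be)*w' - ((n0+1)*C0' + n1*C1' + n2*C2') = (1-al-be)*w - (n0*C0 + n1*C1 + n2*C2).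
  rewrite ew' eC0 eC0' eC1' eC2' eal ebe; field; by rewrite hf hg.
split=> H.
  by apply/eqP; rewrite -subr_eq0 E H subrr.
by apply/eqP; rewrite -subr_eq0 -E H subrr.
Qed.

Lemma int_ind_iff (P : int -> Prop) : P 0 -> (forall n, P n <-> P (n + 1)) -> forall n, P n.
Proof.
move=> P0 S.
have pos : forall n : nat, P n%:Z /\ P (- n%:Z).
  elim=> [|n [IH1 IH2]].
    by rewrite oppr0; split.
  have e1 : (n.+1)%:Z = n%:Z + 1 by rewrite -addn1 PoszD.
  have e2 : - (n.+1)%:Z + 1 = - n%:Z by rewrite e1 opprD subrK.
  split; first by rewrite e1; exact: (proj1 (S _)).
  by apply: (proj2 (S _)); rewrite e2.
by case=> n; [exact: (pos n).1 | rewrite NegzE; exact: (pos n.+1).2].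
Qed.

Lemma vtxS1 k l m : vtx (k + 1) l m = vadd (vtx k l m) d1.
Proof. by rewrite /vtx /vadd /=; congr (_, _); ring. Qed.
Lemma vtxS2 k l m : vtx k (l + 1) m = vadd (vtx k l m) dw.
Proof. by rewrite /vtx /vadd /=; congr (_, _); ring. Qed.
Lemma vtxS3 k l m : vtx k l (m + 1) = vadd (vtx k l m) dw2.
Proof. by rewrite /vtx /vadd /=; congr (_, _); ring. Qed.

Lemma p12 (K : zmodType) (a b c : K) : a + b + c = b + a + c.
Proof. by rewrite (addrC a). Qed.
Lemma p312 (K : zmodType) (a b c : K) : a + b + c = c + a + b.
Proof. by rewrite addrC addrA. Qed.

Lemma pd1 : posdir d1. Proof. by []. Qed.
Lemma pdw : posdir dw. Proof. by []. Qed.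
Lemma pdw2 : posdir dw2. Proof. by []. Qed.
Lemma pn12 : posdir (vneg (vadd d1 dw)). Proof. by []. Qed.
Lemma pn13 : posdir (vneg (vadd d1 dw2)). Proof. by []. Qed.
Lemma pn21 : posdir (vneg (vadd dw d1)). Proof. by []. Qed.
Lemma pn23 : posdir (vneg (vadd dw dw2)). Proof. by []. Qed.
Lemma pn31 : posdir (vneg (vadd dw2 d1)). Proof. by []. Qed.
Lemma pn32 : posdir (vneg (vadd dw2 dw)). Proof. by []. Qed.

Lemma intr1' (K : pzRingType) : (1%:~R : K) = 1.
Proof. by []. Qed.

Theorem proposition16 (R : realType) (u v w : vertex -> R[i]) (alpha beta : R[i]) :
  u (0, 0) = 0 -> v (0, 0) = 0 -> w (0, 0) = 0 ->
  (* well-definedness: increments along positively oriented edges are nonzero *)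
  (forall z d, posdir d -> u (vadd z d) - u z != 0) ->
  (forall z d, posdir d -> v (vadd z d) - v z != 0) ->
  (* the third field w *)
  (forall z d, posdir d ->
     w (vadd z d) - w z = ((u (vadd z d) - u z) * (v (vadd z d) - v z))^-1) ->
  (* well-definedness of the fractions in the constraints *)
  (forall z, den0 u v z != 0) ->
  (forall z, den1 u v z != 0) ->
  (forall z, den2 u v z != 0) ->
  (* the equations on positively oriented elementary triangles *)
  (forall z1 z2 z3, posdir (vsub z2 z1) -> posdir (vsub z3 z2) -> posdir (vsub z1 z3) ->
     (u z2 - u z1) / (u z3 - u z2) = (v z3 - v z2) / (v z1 - v z3)) ->
  (* the constraints for u and v at every vertex (any representative) *)
  (forall k l m : int, let z := vtx k l m in
     alpha * u z =
       k%:~R * (incr0 u z * incr0 v z * incr3 u z / den0 u v z)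
     + l%:~R * (incr2 u z * incr2 v z * incr5 u z / den1 u v z)
     + m%:~R * (incr4 u z * incr4 v z * incr1 u z / den2 u v z)) ->
  (forall k l m : int, let z := vtx k l m in
     beta * v z =
       k%:~R * (incr0 v z * incr3 u z * incr3 v z / den0 u v z)
     + l%:~R * (incr2 v z * incr5 u z * incr5 v z / den1 u v z)
     + m%:~R * (incr4 v z * incr1 u z * incr1 v z / den2 u v z)) ->
  forall k l m : int, let z := vtx k l m in
     (1 - alpha - beta) * w z =
       k%:~R / den0 u v z + l%:~R / den1 u v z + m%:~R / den2 u v z.
Proof.
move=> u0 v0 w0 Hu Hv Hw Hd0 Hd1 Hd2 Htri Ha0 Hb0.
have Ha : forall k l m, alpha * u (vtx k l m) =
   k%:~R * Ac u v d1 (vtx k l m) + l%:~R * Ac u v dw (vtx k l m) + m%:~R * Ac u v dw2 (vtx k l m).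
  by move=> k l m; exact: (Ha0 k l m).
have Hb : forall k l m, beta * v (vtx k l m) =
   k%:~R * Bc u v d1 (vtx k l m) + l%:~R * Bc u v dw (vtx k l m) + m%:~R * Bc u v dw2 (vtx k l m).
  by move=> k l m; exact: (Hb0 k l m).
have P1 : forall z, Pd u v d1 z != 0 by move=> z; exact: Hd0.
have P2 : forall z, Pd u v dw z != 0 by move=> z; exact: Hd1.
have P3 : forall z, Pd u v dw2 z != 0 by move=> z; exact: Hd2.
pose Q k l m := (1 - alpha - beta) * w (vtx k l m) =
   k%:~R * Cc u v d1 (vtx k l m) + l%:~R * Cc u v dw (vtx k l m) + m%:~R * Cc u v dw2 (vtx k l m).
suff HQ : forall k l m, Q k l m by move=> k l m; exact: (HQ k l m).
have S1 : forall k l m, Q k l m <-> Q (k + 1) l m.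
  move=> k l m; rewrite /Q vtxS1 intrD intr1'.
  have := Ha (k + 1) l m; have := Hb (k + 1) l m; rewrite vtxS1 intrD intr1' => Hb' Ha'.
  set z := vtx k l m.
  apply: (step_alg (Hu z d1 pd1) (Hv z d1 pd1)
     (Yself0 Hu Hv (z:=z) pd1 (P1 z)) (Yself1 Hu Hv (z:=z) pd1 (P1 _))
     (Yother Hu Hv Htri (z:=z) pd1 pdw pn12 (P2 _) (P2 _))
     (Yother Hu Hv Htri (z:=z) pd1 pdw2 pn13 (P3 _) (P3 _))
     erefl erefl (Hw z d1 pd1) (Ha k l m) Ha' (Hb k l m) Hb').
have S2 : forall k l m, Q k l m <-> Q k (l + 1) m.
  move=> k l m; rewrite /Q vtxS2 intrD intr1' !(p12 (k%:~R * _)).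
  have := Ha k (l + 1) m; have := Hb k (l + 1) m; rewrite vtxS2 intrD intr1' (p12 (k%:~R * _)) => Hb' Ha'.
  rewrite (p12 (k%:~R * _)) in Ha'.
  have Ha1 := Ha k l m; have Hb1 := Hb k l m.
  rewrite (p12 (k%:~R * _)) in Ha1; rewrite (p12 (k%:~R * _)) in Hb1.
  set z := vtx k l m.
  apply: (step_alg (Hu z dw pdw) (Hv z dw pdw)
     (Yself0 Hu Hv (z:=z) pdw (P2 z)) (Yself1 Hu Hv (z:=z) pdw (P2 _))
     (Yother Hu Hv Htri (z:=z) pdw pd1 pn21 (P1 _) (P1 _))
     (Yother Hu Hv Htri (z:=z) pdw pdw2 pn23 (P3 _) (P3 _))
     erefl erefl (Hw z dw pdw) Ha1 Ha' Hb1 Hb').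
have S3 : forall k l m, Q k l m <-> Q k l (m + 1).
  move=> k l m; rewrite /Q vtxS3 intrD intr1' !(p312 (k%:~R * _)).
  have := Ha k l (m + 1); have := Hb k l (m + 1); rewrite vtxS3 intrD intr1' (p312 (k%:~R * _)) => Hb' Ha'.
  rewrite (p312 (k%:~R * _)) in Ha'.
  have Ha1 := Ha k l m; have Hb1 := Hb k l m.
  rewrite (p312 (k%:~R * _)) in Ha1; rewrite (p312 (k%:~R * _)) in Hb1.
  set z := vtx k l m.
  apply: (step_alg (Hu z dw2 pdw2) (Hv z dw2 pdw2)
     (Yself0 Hu Hv (z:=z) pdw2 (P3 z)) (Yself1 Hu Hv (z:=z) pdw2 (P3 _))
     (Yother Hu Hv Htri (z:=z) pdw2 pd1 pn31 (P1 _) (P1 _))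
     (Yother Hu Hv Htri (z:=z) pdw2 pdw pn32 (P2 _) (P2 _))
     erefl erefl (Hw z dw2 pdw2) Ha1 Ha' Hb1 Hb').
have Q0 : Q 0 0 0.
  rewrite /Q (_ : vtx 0 0 0 = (0, 0)) // w0 mulr0.
  by rewrite !mulr0z !mul0r !addr0.
move=> k l m.
apply: (int_ind_iff (P := fun m => Q k l m)) => //.
apply: (int_ind_iff (P := fun l => Q k l 0)) => //.
by apply: (int_ind_iff (P := fun k => Q k 0 0)).
Qed.
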